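(* Let $\Psi=\langle \mathcal{S},\mathcal{P},\mathcal{T}\rangle$ with $\mathcal{T}=\langle prov,req\rangle$ be an SPL and let $c\in\mathcal{C}$ be redundant. Define $\mathcal{T}'=\langle prov',req'\rangle$ by $prov'(f)=prov(f)\setminus\{A : c\in A\}$ and $req'(f)=req(f)\setminus\{A: c\in A\}$ for every $f\in\mathcal{F}$, and let $\Psi'=\langle \mathcal{S},\mathcal{P},\mathcal{T}'\rangle$. Then $Prod(\Psi)=Prod(\Psi')$.
   Context: An SPL $\Psi=\langle \mathcal{S},\mathcal{P},\mathcal{T}\rangle$ consists of a finite set of features $\mathcal{F}$, a finite set of components $\mathcal{C}$, a scope $\mathcal{S}\subseteq \mathcal{P}ow(\mathcal{F})$ (elements are specifications), a platform $\mathcal{P}\subseteq \mathcal{P}ow(\mathcal{C})$ (elements are architectures), and a traceability relation $\mathcal{T}=\langle prov, req\rangle$ with $prov, req:\mathcal{F}\to\mathcal{P}ow(\mathcal{P}ow(\mathcal{C}))$. For $C\subseteq\mathcal{C}$, $f\in\mathcal{F}$: $implements_\Psi(C,f)$ iff $\exists C_1\in prov(f), C_2\in req(f)$ with $C_2\subseteq C_1\subseteq C$; $Provided\_by_\Psi(C)=\{f: implements_\Psi(C,f)\}$. $\mathrm{Covers}_\Psi(C,F)$ iff $Provided\_by_\Psi(C)\in\mathcal{S}$ and $F\subseteq Provided\_by_\Psi(C)$. The set of products is $Prod(\Psi)=\{\langle F,C\rangle : F\in\mathcal{S}, C\in\mathcal{P}, \mathrm{Covers}_\Psi(C,F)\}$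 (for $\Psi'$ all these notions are computed with $\mathcal{T}'$). A component $c\in\mathcal{C}$ is redundant (in $\Psi$) if for every $C\in\mathcal{P}$ with $c\in C$ there exists $C'\in\mathcal{P}$ with $c\notin C'$, $C'\subseteq C$ and $Provided\_by_\Psi(C)=Provided\_by_\Psi(C')$. *)

(* Defs.v *)
From mathcomp Require Import all_boot.
Set Implicit Arguments. Unset Strict Implicit. Unset Printing Implicit Defensive.

Record trace (F C : finType) := Trace {
  prov : F -> {set {set C}};
  req  : F -> {set {set C}} }.

Record SPL (F C : finType) := MkSPL {
  scope : {set {set F}};
  platform : {set {set C}};
  tr : trace F C }.

Definition implements (F C : finType) (Ps : SPL F C) (A : {set C}) (f : F) : bool :=
  [exists C1 in prov (tr Ps) f, exists C2 in req (tr Ps) f,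
     (C2 \subset C1) && (C1 \subset A)].

Definition Provided_by (F C : finType) (Ps : SPL F C) (A : {set C}) : {set F} :=
  [set f | implements Ps A f].

Definition Covers (F C : finType) (Ps : SPL F C) (A : {set C}) (Fs : {set F}) : bool :=
  (Provided_by Ps A \in scope Ps) && (Fs \subset Provided_by Ps A).

Definition Prod (F C : finType) (Ps : SPL F C) : {set {set F} * {set C}} :=
  [set p | [&& p.1 \in scope Ps, p.2 \in platform Ps & Covers Ps p.2 p.1]].

Definition redundant (F C : finType) (Ps : SPL F C) (c : C) : Prop :=
  forall A, A \in platform Ps -> c \in A ->
    exists A', [/\ A' \in platform Ps, c \notin A', A' \subset A &
                   Provided_by Ps A = Provided_by Ps A'].

Definition remove_comp (F C : finType) (T : trace F C) (c : C) : trace F C :=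
  Trace (fun f => [set A in prov T f | c \notin A])
        (fun f => [set A in req T f | c \notin A]).

Definition SPL_remove (F C : finType) (Ps : SPL F C) (c : C) : SPL F C :=
  MkSPL (scope Ps) (platform Ps) (remove_comp (tr Ps) c).

(* Main.v *)
Require Import Defs.
From mathcomp Require Import all_boot.
Set Implicit Arguments. Unset Strict Implicit.

Lemma impl_sub (F C : finType) (Ps : SPL F C) (c : C) (A : {set C}) f :
  implements (SPL_remove Ps c) A f -> implements Ps A f.
Proof.
case/exists_inP=> C1; rewrite inE => /andP[H1 _] /exists_inP[C2].
rewrite inE => /andP[H2 _] H; apply/exists_inP; exists C1 => //.
by apply/exists_inP; exists C2.
Qed.

Lemma impl_mono (F C : finType) (Ps : SPL F C) (A B : {set C}) f :
  A \subset B -> implements Ps A f -> implements Ps B f.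
Proof.
move=> AB /exists_inP[C1 H1 /exists_inP[C2 H2 /andP[h1 h2]]].
apply/exists_inP; exists C1 => //; apply/exists_inP; exists C2 => //.
by rewrite h1 (subset_trans h2 AB).
Qed.

Lemma impl_noc (F C : finType) (Ps : SPL F C) (c : C) (A : {set C}) f :
  c \notin A -> implements Ps A f -> implements (SPL_remove Ps c) A f.
Proof.
move=> cA /exists_inP[C1 H1 /exists_inP[C2 H2 /andP[h1 h2]]].
have c1 : c \notin C1 by apply/negP => /(subsetP h2); apply/negP.
have c2 : c \notin C2 by apply/negP => /(subsetP h1); apply/negP.
apply/exists_inP; exists C1; first by rewrite inE H1.
by apply/exists_inP; exists C2; rewrite ?inE ?H2 ?h1.
Qed.

Lemma prov_eq (F C : finType) (Ps : SPL F C) (c : C) (A : {set C}) :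
  redundant Ps c -> A \in platform Ps ->
  Provided_by Ps A = Provided_by (SPL_remove Ps c) A.
Proof.
move=> R AP; apply/setP => f; rewrite !inE.
apply/idP/idP; last exact: impl_sub.
case: (boolP (c \in A)) => cA; last exact: impl_noc.
have [A' [_ cA' sub E]] := R A AP cA.
move=> H; have : f \in Provided_by Ps A by rewrite inE.
rewrite E inE => H'.
idtac.
have K := impl_noc cA' H'. have K2 := impl_mono sub K. exact K2.
Qed.

Theorem mainTheorem4 (F C : finType) (Ps : SPL F C) (c : C) :
  redundant Ps c -> Prod Ps = Prod (SPL_remove Ps c).
Proof.
move=> R; apply/setP => -[Fs A]; rewrite !inE /=.
case: (boolP (A \in platform Ps)) => AP; last by rewrite !andbF.
by rewrite /Covers /= (prov_eq R AP).
Qed.
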